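(* Let $\mathcal{C}$ be a layered circuit of depth $n^{\delta}$ over an alphabet $\Sigma$ whose symbols are $b\log n$ bits, which has an $n^{\varphi}$-parallel partition. Then there is an algorithm in the (non-faulty) Clique model that computes the function $f_{\mathcal{C}}$ in $O(n^{\delta+\varphi})$ rounds.
   Context: Clique model: $n$ nodes communicate in synchronous rounds; in each round every ordered pair of nodes may exchange a message of $b\log n$ bits, for a fixed constant $b$. $\Sigma$ is an alphabet of size $2^{b\log n}$. Layered circuit of depth $D$ over $\Sigma$: a connected directed graph with gate set $V=V_0\cup\dots\cup V_D$ and wires only from $V_i$ to $V_{i+1}$; each gate $v$ of fan-in $F$ is labeled by $f_v:\Sigma^F\to\Sigma$; gates of $V_0$ are input gates; $f_{\mathcal{C}}$ maps the inputs to the values of the gates of $V_D$. $n^{\varphi}$-parallel partition: a partition of each layer $V_i$ into $n$ parts $P_{i,w}$, $w\in\{0,\dots,n-1\}$ (part $P_{i,w}$ assigned to node $w$), such that for all $i,w$ the number of wires from $P_{i,w}$ to gates of $V_{i+1}\setminus P_{i+1,w}$ and the number of wires into $P_{i+1,w}$ from gates of $V_i\setminus P_{i,w}$ are both $O(n^{1+\varphi})$. An algorithm computes $f_{\mathcal{C}}$ when the circuit inputs are distributed among the nodes according to the parts of $V_0$ and each node $w$ ends holding the values of the gates in its part of the last layer. $\delta,\varphi$ are fixed and $O(\cdot)$ refers to $n\to\infty$. *)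

(* Defs.v *)
From mathcomp Require Import all_boot.
From Stdlib Require Import Reals.

Set Implicit Arguments.
Unset Strict Implicit.
Unset Printing Implicit Defensive.

(* The alphabet Sigma: symbols of b * ceil(log2 n) bits, i.e. 2^(b log n) symbols.
   A Clique message (per ordered pair, per round) is one symbol of Sigma. *)
Definition Sigma (b n : nat) : Type := 'I_(2 ^ (b * up_log 2 n)).

Definition layered_circuit (G : finType) (D : nat) (layer : G -> nat) (wire : rel G) : Prop :=
  [/\ (forall v, layer v <= D),
      (forall i, i <= D -> exists v, layer v = i),
      (forall u v, wire u v -> layer v = (layer u).+1) &
      (forall u v, connect (fun a c => wire a c || wire c a) u v)].

Fixpoint gval_at (G : finType) (S : Type) (wire : rel G)
    (f : forall v : G, ({u : G | wire u v} -> S) -> S) (x : G -> S) (k : nat) (v : G) : S :=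
  match k with
  | 0 => x v
  | k'.+1 => f v (fun u => gval_at f x k' (val u))
  end.

(* Value of gate v on input x (only the values of x on input gates matter). *)
Definition gate_value (G : finType) (S : Type) (layer : G -> nat) (wire : rel G)
    (f : forall v : G, ({u : G | wire u v} -> S) -> S) (x : G -> S) (v : G) : S :=
  gval_at f x (layer v) v.

(* part v = w means v belongs to P_{layer v, w}. *)
Definition out_cross (G : finType) n (layer : G -> nat) (wire : rel G) (part : G -> 'I_n)
    (i : nat) (w : 'I_n) : nat :=
  #|[set p : G * G | [&& wire p.1 p.2, layer p.1 == i, part p.1 == w & part p.2 != w]]|.

Definition in_cross (G : finType) n (layer : G -> nat) (wire : rel G) (part : G -> 'I_n)
    (i : nat) (w : 'I_n) : nat :=
  #|[set p : G * G | [&& wire p.1 p.2, layer p.1 == i, part p.2 == w & part p.1 != w]]|.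

(* The cross-wire counts are bounded by C * n^(1+phi) (C is the O-constant). *)
Definition parallel_partition (C phi : R) (G : finType) n (layer : G -> nat) (wire : rel G)
    (part : G -> 'I_n) : Prop :=
  forall (i : nat) (w : 'I_n),
    (INR (out_cross layer wire part i w) <= C * Rpower (INR n) (1 + phi))%R /\
    (INR (in_cross layer wire part i w) <= C * Rpower (INR n) (1 + phi))%R.

(* Local state and computation are
   unrestricted (arbitrary state type S). *)
Fixpoint run n (S M : Type) (send : nat -> 'I_n -> 'I_n -> S -> M)
    (upd : nat -> 'I_n -> S -> ('I_n -> M) -> S) (r : nat) (s0 : 'I_n -> S) : 'I_n -> S :=
  match r with
  | 0 => s0
  | r'.+1 => let s := run send upd r' s0 in
             fun w => upd r' w (s w) (fun u => send r' u w (s u))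
  end.

Definition clique_computes_in (n : nat) (M : Type) (G : finType) (D : nat)
    (layer : G -> nat) (wire : rel G) (f : forall v : G, ({u : G | wire u v} -> M) -> M)
    (part : G -> 'I_n) (rounds : nat) : Prop :=
  exists (S : Type)
         (init : forall w : 'I_n, ({v : G | (layer v == 0) && (part v == w)} -> M) -> S)
         (send : nat -> 'I_n -> 'I_n -> S -> M)
         (upd : nat -> 'I_n -> S -> ('I_n -> M) -> S)
         (out : 'I_n -> S -> G -> M),
    forall x : G -> M, forall v : G, layer v = D ->
      out (part v) (run send upd rounds (fun w => init w (fun u => x (val u)))
                                (part v)) v
      = gate_value layer f x v.

(* Main.v *)
Require Import Defs.
From mathcomp Require Import all_boot.
From Stdlib Require Import Reals.
From mathcomp Require Import zify.
From Stdlib Require Import Lra Lia ZArith FunctionalExtensionality ClassicalEpsilon.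
Set Implicit Arguments. Unset Strict Implicit. Unset Printing Implicit Defensive.

Lemma sum_card_fibers (E J : finType) (A : {set E}) (g : E -> J) :
  \sum_(x : J) #|[set e in A | g e == x]| = #|A|.
Proof.
rewrite -sum1_card (partition_big g predT) //=.
apply: eq_bigr => x _; rewrite -sum1_card; apply: eq_bigl => e.
by rewrite inE.
Qed.

Lemma bad_bound (E J : finType) (A : {set E}) (g : E -> J) L :
  #|[set x | L <= #|[set e in A | g e == x]|]| * L <= #|A|.
Proof.
rewrite -(sum_card_fibers A g) (bigID (fun x => x \in [set x | L <= #|[set e in A | g e == x]|])) /=.
apply: leq_trans (leq_addr _ _).
rewrite -sum1_card big_distrl /= mul1n.
by apply: leq_sum => x; rewrite inE.
Qed.

Lemma greedy (n : nat) (E : finType) (src dst : E -> 'I_n) (Kn L : nat) :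
  0 < n -> 2 * Kn < L * n -> forall P : {set E},
  (forall a, #|[set e in P | src e == a]| <= Kn) ->
  (forall w, #|[set e in P | dst e == w]| <= Kn) ->
  exists inter : E -> 'I_n,
   (forall a x, #|[set e in P | (src e == a) && (inter e == x)]| <= L) /\
   (forall x w, #|[set e in P | (inter e == x) && (dst e == w)]| <= L).
Proof.
move=> n0 hKL P.
have empty : forall P : {set E}, P = set0 -> exists inter : E -> 'I_n,
   (forall a x, #|[set e in P | (src e == a) && (inter e == x)]| <= L) /\
   (forall x w, #|[set e in P | (inter e == x) && (dst e == w)]| <= L).
  move=> Q ->; have x0 : 'I_n := Ordinal n0.
  by exists (fun _ => x0); split=> *; apply: (@leq_trans 0) => //; rewrite leqn0 cards_eq0; apply/eqP/setP => e; rewrite !inE.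
have [N hN] : exists N, #|P| <= N by exists #|P|.
elim: N P hN => [|N IH] P hP hs hd.
  by apply: empty; move: hP; rewrite leqn0 cards_eq0 => /eqP.
case: (set_0Vmem P) => [->|[e0 he0]]; first exact: empty.
set P' := P :\ e0.
have hP' : #|P'| <= N by move: hP; rewrite (cardsD1 e0 P) he0.
have sub : forall Q : pred E, [set e in P' | Q e] \subset [set e in P | Q e].
  by move=> Q; apply/subsetP => e; rewrite !inE => /andP[/andP[_ ->] ->].
have [inter' [h1 h2]] := IH P' hP' (fun a => leq_trans (subset_leq_card (sub _)) (hs a))
                                  (fun a => leq_trans (subset_leq_card (sub _)) (hd a)).
set a0 := src e0; set w0 := dst e0.
have cs : #|[set e in P' | src e == a0]|.+1 <= Kn.
  apply: leq_trans (hs a0).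
  rewrite [X in _ <= X](cardsD1 e0) !inE he0 eqxx /= add1n ltnS.
  apply: subset_leq_card; apply/subsetP => e; rewrite !inE.
  by move=> /andP[/andP[-> ->] ->].
have cd : #|[set e in P' | dst e == w0]|.+1 <= Kn.
  apply: leq_trans (hd w0).
  rewrite [X in _ <= X](cardsD1 e0) !inE he0 eqxx /= add1n ltnS.
  apply: subset_leq_card; apply/subsetP => e; rewrite !inE.
  by move=> /andP[/andP[-> ->] ->].
pose B1 := [set x | L <= #|[set e in [set e in P' | src e == a0] | inter' e == x]|].
pose B2 := [set x | L <= #|[set e in [set e in P' | dst e == w0] | inter' e == x]|].
have b1 := bad_bound [set e in P' | src e == a0] inter' L.
have b2 := bad_bound [set e in P' | dst e == w0] inter' L.
have hU : #|B1 :|: B2| < n.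
  apply: leq_ltn_trans (leq_card_setU _ _) _.
  rewrite -/B1 -/B2 in b1 b2.
  nia.
have [x hx] : exists x, x \notin B1 :|: B2.
  apply/existsP; rewrite -negb_forall; apply/negP => /forallP H.
  have : [set: 'I_n] \subset B1 :|: B2 by apply/subsetP => y _; exact: H.
  by move/subset_leq_card; rewrite cardsT card_ord leqNgt hU.
rewrite inE negb_or !inE -!ltnNge in hx; case/andP: hx => hx1 hx2.
exists (fun e => if e == e0 then x else inter' e); split.
- move=> a y; rewrite (cardsD1 e0) !inE he0 eqxx /=.
  set S := [set _ in _ | _] :\ e0.
  have -> : S = [set e in P' | (src e == a) && (inter' e == y)].
    apply/setP => e; rewrite !inE; case: (e =P e0) => //= _.
  case: (_ =P a) => [ea|_]; case: (_ =P y) => [ey|_] /=; rewrite ?add0n; try exact: h1.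
  rewrite add1n; apply: leq_trans hx1; rewrite -ea -ey; apply: subset_leq_card.
  apply/subsetP => e; rewrite !inE !andbA; exact: (fun h => h).
- move=> y w; rewrite (cardsD1 e0) !inE he0 eqxx /=.
  set S := [set _ in _ | _] :\ e0.
  have -> : S = [set e in P' | (inter' e == y) && (dst e == w)].
    apply/setP => e; rewrite !inE; case: (e =P e0) => //= _.
  case: (_ =P y) => [ey|_]; case: (_ =P w) => [ew|_] /=; rewrite ?add0n; try exact: h2.
  rewrite add1n; apply: leq_trans hx2; rewrite -ew -ey; apply: subset_leq_card.
  by apply/subsetP => e; rewrite !inE => /and3P[-> -> ->].
Qed.

Lemma nth_enum_idx (T : finType) (A : {set T}) p : p \in A ->
  index p (enum A) < #|A| /\ nth None (map Some (enum A)) (index p (enum A)) = Some p.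
Proof.
move=> hp; have hi : index p (enum A) < size (enum A) by rewrite index_mem mem_enum.
split; first by rewrite cardE.
by rewrite (nth_map p) // nth_index // mem_enum.
Qed.

Section Sched.
Variables (n : nat) (G : finType) (layer : G -> nat) (wire : rel G) (part : G -> 'I_n)
  (inter : nat -> G * G -> 'I_n) (L : nat).
Definition Eset i := [set p : G * G | [&& wire p.1 p.2, layer p.1 == i & part p.1 != part p.2]].
Definition S1 i a x := [set p in Eset i | (part p.1 == a) && (inter i p == x)].
Definition S2 i x w := [set p in Eset i | (inter i p == x) && (part p.2 == w)].
Definition schedf t a b : option G :=
  let i := t %/ L.*2.+1 in let j := t %% L.*2.+1 in
  if j < L then omap fst (nth None (map Some (enum (S1 i a b))) j)
  else omap fst (nth None (map Some (enum (S2 i a b))) (j - L)).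
Hypothesis h1 : forall i a x, #|S1 i a x| <= L.
Hypothesis h2 : forall i x w, #|S2 i x w| <= L.

Lemma schedf_ok i u v : wire u v -> layer u = i -> part u != part v ->
  exists x j1 j2, [/\ j1 < L, j2 < L, schedf (i * L.*2.+1 + j1) (part u) x = Some u &
                      schedf (i * L.*2.+1 + L + j2) x (part v) = Some u].
Proof.
move=> hw hl hne; set p := (u, v); set x := inter i p.
have hpE : p \in Eset i by rewrite inE /= hw hl eqxx hne.
have m1 : p \in S1 i (part u) x by rewrite inE hpE /= !eqxx.
have m2 : p \in S2 i x (part v) by rewrite inE hpE /= !eqxx.
have [hi1 hn1] := nth_enum_idx m1.
have [hi2 hn2] := nth_enum_idx m2.
move: (index p (enum (S1 i (part u) x))) hi1 hn1 => j1 hi1 hn1.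
move: (index p (enum (S2 i x (part v)))) hi2 hn2 => j2 hi2 hn2.
exists x, j1, j2.
have l1 := leq_trans hi1 (h1 i (part u) x).
have l2 := leq_trans hi2 (h2 i x (part v)).
split => //.
  rewrite /schedf divnMDl // modnMDl modn_small; last by rewrite -mul2n; lia.
  rewrite divn_small ?addn0; last by rewrite -mul2n; lia.
  by rewrite l1 hn1.
rewrite /schedf -addnA divnMDl // modnMDl modn_small; last by rewrite -mul2n; lia.
rewrite divn_small ?addn0; last by rewrite -mul2n; lia.
by rewrite ltnNge leq_addr /= addKn hn2.
Qed.
End Sched.

Section Sim.
Variables (n : nat) (M : Type) (m0 : M) (G : finType) (layer : G -> nat) (wire : rel G)
 (f : forall v : G, ({u : G | wire u v} -> M) -> M) (part : G -> 'I_n)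
 (sched : nat -> 'I_n -> 'I_n -> option G).
Hypothesis hwire : forall u v, wire u v -> layer v = (layer u).+1.

Definition K1 (K : 'I_n -> G -> bool) t w g :=
  K w g || [exists u, (sched t u w == Some g) && K u g].
Fixpoint Kt t : 'I_n -> G -> bool := match t with
 | 0 => fun w g => (layer g == 0) && (part g == w)
 | t'.+1 => fun w g => K1 (Kt t') t' w g ||
      ((0 < layer g) && [forall u, wire u g ==> K1 (Kt t') t' w u]) end.

Definition sendf t u w (s : G -> M) : M := if sched t u w is Some g then s g else m0.
Definition s1f t w (s : G -> M) (msgs : 'I_n -> M) : G -> M := fun g =>
  if [pick u | (sched t u w == Some g) && Kt t u g] is Some u then msgs u else s g.
Definition updf t w (s : G -> M) (msgs : 'I_n -> M) : G -> M := fun g =>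
  if (0 < layer g) && [forall u, wire u g ==> K1 (Kt t) t w u]
  then f (fun u : {u | wire u g} => s1f t w s msgs (val u)) else s1f t w s msgs g.
Definition initf w (h : {v : G | (layer v == 0) && (part v == w)} -> M) : G -> M :=
  fun g => oapp h m0 (insub g).

Lemma gate_value_S x g : 0 < layer g ->
  gate_value layer f x g = f (fun u : {u | wire u g} => gate_value layer f x (val u)).
Proof.
rewrite /gate_value; case E: (layer g) => [|k] // _ /=.
congr (f _); apply: functional_extensionality => -[u hu] /=.
by have := hwire hu; rewrite E => -[->].
Qed.

Lemma Kt_mono t t' w g : t <= t' -> Kt t w g -> Kt t' w g.
Proof.
move=> /subnK <-; elim: (t' - t) => //= d IH /IH H.
by rewrite /K1 H.
Qed.

Lemma sim_correct x t w g : Kt t w g ->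
  run sendf updf t (fun w => @initf w (fun u => x (val u))) w g = gate_value layer f x g.
Proof.
elim: t w g => [|t IH] w g /=.
  case/andP => /eqP h0 /eqP hp; rewrite /initf insubT /=; first by rewrite h0 hp !eqxx.
  by move=> ?; rewrite /gate_value h0.
set s := run _ _ t _.
have hs1 : forall g, K1 (Kt t) t w g -> s1f t w (s w) (fun u => sendf t u w (s u)) g = gate_value layer f x g.
  move=> g' hK; rewrite /s1f; case: pickP => [u /andP[/eqP hsc hK']|none].
    by rewrite /sendf hsc; apply: IH.
  move: hK; rewrite /K1; case/orP => [/IH //|/existsP[u hu]].
  by rewrite none in hu.
rewrite /updf; case: ifP => [/andP[hl /forallP hf] _|hn].
  rewrite gate_value_S //; congr (f _); apply: functional_extensionality => -[u hu] /=.
  by apply: hs1; have := hf u; rewrite hu.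
move=> hK; apply: hs1; case/orP: hK => //.
Qed.


Lemma K1_of t w g : Kt t w g -> K1 (Kt t) t w g.
Proof. by rewrite /K1 => ->. Qed.

Lemma K1_recv t u w g : sched t u w = Some g -> Kt t u g -> Kt t.+1 w g.
Proof.
move=> hs hk /=; apply/orP; left; apply/orP; right; apply/existsP; exists u.
by rewrite hs eqxx hk.
Qed.

Lemma reach (B L : nat) :
  L.*2 < B ->
  (forall i u v, wire u v -> layer u = i -> part u != part v ->
     exists x j1 j2, [/\ j1 < L, j2 < L, sched (i * B + j1) (part u) x = Some u &
                        sched (i * B + L + j2) x (part v) = Some u]) ->
  forall i v, layer v = i -> Kt (i * B) (part v) v.
Proof.
move=> hB hsch; elim=> [|i IH] v hv.
  by rewrite /= hv !eqxx.
set t := i * B + L.*2.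
apply: (@Kt_mono t.+1); first by rewrite mulSn; lia.
rewrite /=; apply/orP; right; rewrite hv /=; apply/forallP => u; apply/implyP => hw.
have hu : layer u = i by have := hwire hw; rewrite hv => -[].
case: (eqVneq (part u) (part v)) => [<-|hne].
  by apply: K1_of; apply: (@Kt_mono (i * B)); [lia | exact: IH].
have [x [j1 [j2 [hj1 hj2 hs1 hs2]]]] := hsch _ _ _ hw hu hne.
apply: K1_of; apply: (@Kt_mono (i * B + L + j2).+1); first lia.
apply: (K1_recv hs2); apply: (@Kt_mono (i * B + j1).+1); first lia.
by apply: (K1_recv hs1); apply: (@Kt_mono (i * B)); [lia | exact: IH].
Qed.


Lemma sim_computes (D B L : nat) :
  L.*2 < B ->
  (forall i u v, wire u v -> layer u = i -> part u != part v ->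
     exists x j1 j2, [/\ j1 < L, j2 < L, sched (i * B + j1) (part u) x = Some u &
                        sched (i * B + L + j2) x (part v) = Some u]) ->
  @clique_computes_in n M G D layer wire f part (D * B).
Proof.
move=> hB hsch.
exists (G -> M), (fun w h => @initf w h), sendf, updf, (fun w s g => s g).
move=> x v hv.
apply: sim_correct; exact: (reach hB hsch).
Qed.

End Sim.

Lemma up_bound X m : (INR m <= X)%R -> (m <= Z.to_nat (up X)).
Proof.
move=> h; have [h1 _] := archimed X.
have : (IZR (Z.of_nat m) < IZR (up X))%R by rewrite -INR_IZR_INZ; lra.
move/lt_IZR => h2; apply/leP; lia.
Qed.

Lemma up_le X : (INR (Z.to_nat (up X)) <= Rabs X + 1)%R.
Proof.
have [h1 h2] := archimed X.
have ha := Rle_abs X.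
case: (Z.le_gt_cases (up X) 0) => hz.
  have -> : Z.to_nat (up X) = 0 by lia.
  simpl; have := Rabs_pos X; lra.
rewrite INR_IZR_INZ Z2Nat.id; [lra | lia].
Qed.

Lemma round_bound (n Kn : nat) (c p : R) : (0 < n) -> (1 <= p)%R -> (0 <= c)%R ->
  (INR Kn <= c * INR n * p + 1)%R ->
  (INR ((((2*Kn) %/ n + 1).*2.+1)) <= (4*c+7) * p)%R.
Proof.
move=> hn hp hc hK.
set q := (2*Kn) %/ n.
have hq : (q * n <= 2 * Kn) by exact: leq_divM.
have hnat : ((((q + 1).*2.+1)) * n <= 4 * Kn + 3 * n).
  rewrite -mul2n; nia.
have hr : (INR ((q + 1).*2.+1) * INR n <= 4 * INR Kn + 3 * INR n)%R.
  rewrite -mult_INR; apply: Rle_trans (le_INR _ _ (elimT leP hnat)) _.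
  rewrite plus_INR !mult_INR; simpl; lra.
have hn1 : (1 <= INR n)%R by apply: (le_INR 1); apply/leP.
apply: (Rmult_le_reg_r (INR n)); first lra.
apply: Rle_trans hr _.
have : (0 <= c * INR n * p)%R by apply: Rmult_le_pos; [apply: Rmult_le_pos|]; lra.
nra.
Qed.

Theorem lemma3 (b : nat) (delta phi C : R) :
  0 < b -> (0 <= phi)%R ->
  exists (C' : R) (N : nat), forall n : nat, N <= n ->
  forall (G : finType) (D : nat) (layer : G -> nat) (wire : rel G)
         (f : forall v : G, ({u : G | wire u v} -> Sigma b n) -> Sigma b n)
         (part : G -> 'I_n),
    layered_circuit D layer wire ->
    (INR D <= Rpower (INR n) delta)%R ->
    parallel_partition C phi layer wire part ->
    exists rounds : nat,
      (INR rounds <= C' * Rpower (INR n) (delta + phi))%R /\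
      @clique_computes_in n (Sigma b n) G D layer wire f part rounds.
Proof.
move=> hb hphi.
exists (4 * Rabs C + 7)%R, 1%N => n hn G D layer wire f part hlc hD hpp.
have n0 : 0 < n by [].
have hnR : (0 < INR n)%R by apply: (lt_INR 0); apply/ltP.
set X := (C * Rpower (INR n) (1 + phi))%R.
set Kn := Z.to_nat (up X).
set L := (2 * Kn) %/ n + 1.
have hKL : 2 * Kn < L * n by rewrite /L addn1 ltn_ceil.
have hwire : forall u v, wire u v -> layer v = (layer u).+1 by case: hlc.
have hinter : forall i, exists inter : G * G -> 'I_n,
   (forall a x, #|[set e in Eset layer wire part i | (part e.1 == a) && (inter e == x)]| <= L) /\
   (forall x w, #|[set e in Eset layer wire part i | (inter e == x) && (part e.2 == w)]| <= L).
  move=> i; apply: (greedy (src := fun e : G * G => part e.1) (dst := fun e : G * G => part e.2)) n0 hKL _ _ _.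
  - move=> a; apply: up_bound; apply: Rle_trans (proj1 (hpp i a)); right; congr INR.
    rewrite /out_cross; apply: eq_card => p; rewrite !inE.
    case: (part p.1 =P a) => [->|_]; rewrite /= ?andbT ?andbF // [a == _]eq_sym; reflexivity.
  - move=> a; apply: up_bound; apply: Rle_trans (proj2 (hpp i a)); right; congr INR.
    rewrite /in_cross; apply: eq_card => p; rewrite !inE.
    by case: (part p.2 =P a) => [->|_]; rewrite /= ?andbT ?andbF.
have [interF hI] := choice _ hinter.
have m0 : Sigma b n by exists 0; have := Nat.pow_nonzero 2 (b * up_log 2 n); lia.
exists (D * L.*2.+1); split.
  have hp1 : (1 <= Rpower (INR n) phi)%R.
    rewrite -(Rpower_O (INR n)) //; apply: Rle_Rpower => //.
    by apply: (le_INR 1); apply/leP.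
  have hK : (INR Kn <= Rabs C * INR n * Rpower (INR n) phi + 1)%R.
    apply: Rle_trans (up_le X) _; right; rewrite /X Rabs_mult Rpower_plus Rpower_1 //.
    rewrite (Rabs_pos_eq (INR n * _)) ?Rmult_assoc //.
    apply: Rmult_le_pos; [lra | rewrite /Rpower; exact: Rlt_le _ _ (exp_pos _)].
  have hB := round_bound n0 hp1 (Rabs_pos C) hK.
  rewrite mult_INR Rpower_plus.
  apply: (@Rle_trans _ (Rpower (INR n) delta * ((4 * Rabs C + 7) * Rpower (INR n) phi))%R).
    apply: Rmult_le_compat; try exact: pos_INR; [exact: hD | exact: hB].
  right; ring.
apply: (@sim_computes n (Sigma b n) m0 G layer wire f part (schedf layer wire part interF L) hwire D L.*2.+1 L) => //.
move=> i u v hw hl hne; apply: schedf_ok => //.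
- by move=> i' a x; exact: (proj1 (hI i')).
- by move=> i' a x; exact: (proj2 (hI i')).
Qed.
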